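(* Assume $r(\boldsymbol\gamma)\le2+\alpha\le R(\boldsymbol\gamma)$ and let $(\mathbf A^{\rm d},\mathbf q^{\rm d})$ be an equilibrium with $\mathbf A^{\rm d}\mathbf q^{\rm d}=\boldsymbol\beta$, $\mathbf q^{\rm d}=\boldsymbol\gamma/(2+\alpha)$. Let $\boldsymbol\sigma\in\{-1,1\}^n$ and let $(\mathbf A^{\boldsymbol\sigma},\mathbf q^{\boldsymbol\sigma})$ be an equilibrium with $\mathbf a_i^{\boldsymbol\sigma}=\sigma_i\boldsymbol\beta$ for all $i$ (so $\mathbf q^{\boldsymbol\sigma}=\frac{\boldsymbol\gamma}{2+\alpha}-\frac{\alpha(\boldsymbol\sigma^\top\boldsymbol\gamma-(2+\alpha))}{(2+\alpha)(2+(n+1)\alpha)}\boldsymbol\sigma$). Then $\Omega(\mathbf A^{\rm d},\mathbf q^{\rm d})>\Omega(\mathbf A^{\boldsymbol\sigma},\mathbf q^{\boldsymbol\sigma})$ whenever $$\boldsymbol\sigma^\top\boldsymbol\gamma>2+\alpha\qquad\text{or}\qquad \boldsymbol\sigma^\top\boldsymbol\gamma<\frac{n\alpha(2+\alpha)}{2(1+\alpha)(2+(n+1)\alpha)+n\alpha}.$$ In particular: (i) for $\boldsymbol\sigma=\mathbf 1$ (all $\mathbf a_i=\boldsymbol\beta$), $\Omega(\mathbf A^{\rm d},\mathbf q^{\rm d})\ge\Omega(\mathbf A^{\mathbf 1},\mathbf q^{\mathbf 1})$, with strict inequality unless $R(\boldsymbol\gamma)=2+\alpha$; (ii) $\Omega(\mathbf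 A^{\rm d},\mathbf q^{\rm d})>\Omega(\mathbf A^{\boldsymbol\sigma},\mathbf q^{\boldsymbol\sigma})$ whenever $\boldsymbol\sigma^\top\boldsymbol\gamma\le0$.
   Context: Model: integers $n\ge2$, $m\ge2$; $\alpha>0$, $\boldsymbol\beta\in\mathbb R^m$ with $\|\boldsymbol\beta\|_2=1$, $\boldsymbol\gamma\in\mathbb R^n$ with all $\gamma_i>0$. With $\mathbf x=\mathbf A\mathbf q$, total surplus $\Omega(\mathbf A,\mathbf q)=\alpha(\mathbf x^\top\boldsymbol\beta-\tfrac12\mathbf x^\top\mathbf x)+\mathbf q^\top\boldsymbol\gamma-\tfrac12\mathbf q^\top\mathbf q$. Oligopoly: firm $i$ chooses a unit vector $\mathbf a_i\in\mathbb R^m$ and $q_i\ge0$ to maximize $\Pi_i=\alpha q_i\mathbf a_i^\top(\boldsymbol\beta-\sum_{j\ne i}q_j\mathbf a_j)-(1+\alpha)q_i^2+\gamma_iq_i$ given others; $\mathbf A=[\mathbf a_1,\dots,\mathbf a_n]$; an equilibrium is a profile of mutual best responses. $R(\mathbf v)=\|\mathbf v\|_1$, $r(\mathbf v)=2\|\mathbf v\|_\infty-\|\mathbf v\|_1$. *)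

(* Defs.v *)
(* Vectors are column vectors 'cV[R]_k over a real field R;
   the strategy profile A is an m x n matrix whose i-th column is a_i. *)
From mathcomp Require Import all_boot all_order all_algebra.
Set Implicit Arguments. Unset Strict Implicit. Unset Printing Implicit Defensive.
Import Order.TTheory GRing.Theory Num.Theory.
Local Open Scope ring_scope.

Section Model.
Variable R : realFieldType.

Definition dotv (k : nat) (u v : 'cV[R]_k) : R := \sum_(i < k) u i 0 * v i 0.

Definition Rnorm1 (k : nat) (v : 'cV[R]_k) : R := \sum_(i < k) `|v i 0|.
Definition normInf (k : nat) (v : 'cV[R]_k) : R :=
  \big[Num.max/0]_(i < k) `|v i 0|.
Definition rsmall (k : nat) (v : 'cV[R]_k) : R := 2 * normInf v - Rnorm1 v.

Definition Omega (m n : nat) (alpha : R) (beta : 'cV[R]_m) (gamma : 'cV[R]_n)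
  (A : 'M[R]_(m, n)) (q : 'cV[R]_n) : R :=
  let x := A *m q in
  alpha * (dotv x beta - 2^-1 * dotv x x) + dotv q gamma - 2^-1 * dotv q q.

Definition profit (m n : nat) (alpha : R) (beta : 'cV[R]_m) (gamma : 'cV[R]_n)
  (A : 'M[R]_(m, n)) (q : 'cV[R]_n) (i : 'I_n) (a : 'cV[R]_m) (qi : R) : R :=
  alpha * qi * dotv a (beta - \sum_(j < n | j != i) q j 0 *: col j A)
  - (1 + alpha) * qi ^+ 2 + gamma i 0 * qi.

Definition unit_vec (m : nat) (a : 'cV[R]_m) : Prop := dotv a a = 1.

Definition equilibrium (m n : nat) (alpha : R) (beta : 'cV[R]_m)
  (gamma : 'cV[R]_n) (A : 'M[R]_(m, n)) (q : 'cV[R]_n) : Prop :=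
  forall i : 'I_n,
    unit_vec (col i A) /\ 0 <= q i 0 /\
    (forall (a : 'cV[R]_m) (qi : R), unit_vec a -> 0 <= qi ->
       profit alpha beta gamma A q i a qi
       <= profit alpha beta gamma A q i (col i A) (q i 0)).

End Model.

(* Main.v *)
Require Import Defs.
From mathcomp Require Import all_boot all_order all_algebra.
From mathcomp Require Import ring lra.
Import Order.TTheory GRing.Theory Num.Theory.
Local Open Scope ring_scope.
From mathcomp Require Import ring lra.
Set Implicit Arguments. Unset Strict Implicit.

Section H.
Variable R : realFieldType.

Lemma dotvC k (u v : 'cV[R]_k) : dotv u v = dotv v u.
Proof. by apply: eq_bigr => i _; rewrite mulrC. Qed.
Lemma dotvZl k a (u v : 'cV[R]_k) : dotv (a *: u) v = a * dotv u v.
Proof. by rewrite /dotv mulr_sumr; apply: eq_bigr => i _; rewrite mxE mulrA. Qed.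
Lemma dotvZr k a (u v : 'cV[R]_k) : dotv u (a *: v) = a * dotv u v.
Proof. by rewrite dotvC dotvZl dotvC. Qed.
Lemma dotvDl k (u v w : 'cV[R]_k) : dotv (u + v) w = dotv u w + dotv v w.
Proof. by rewrite /dotv -big_split; apply: eq_bigr => i _; rewrite mxE mulrDl. Qed.
Lemma dotvDr k (u v w : 'cV[R]_k) : dotv w (u + v) = dotv w u + dotv w v.
Proof. by rewrite dotvC dotvDl; congr (_ + _); apply: dotvC. Qed.

Lemma best_resp (a g k q : R) : 0 < a -> 0 < g -> 0 <= q ->
  (forall x, 0 <= x -> k*x - (1+a)*x^+2 <= k*q - (1+a)*q^+2) ->
  (forall x, 0 <= x -> (2*g-k)*x - (1+a)*x^+2 <= k*q-(1+a)*q^+2) ->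
  2*(1+a)*q = k.
Proof.
move=> a0 g0 q0 H1 H2.
have a1 : 0 < 1 + a by lra.
case: (lerP 0 k) => k0.
  have := H1 (k / (2*(1+a))) (divr_ge0 k0 (ltW (mulr_gt0 (ltr0Sn _ 1) a1))).
  set x := k / _ => h.
  have kx : k = 2*(1+a)*x by rewrite /x mulrC divfK // gt_eqF // mulr_gt0.
  rewrite kx in h.
  have : (1+a) * (q - x)^+2 <= 0 by nra.
  rewrite pmulr_rle0 // => hs.
  have : (q - x)^+2 == 0 by rewrite eq_le hs sqr_ge0.
  rewrite sqrf_eq0 subr_eq0 => /eqP ->; by rewrite kx.
have := H2 (g / (1+a)) (divr_ge0 (ltW g0) (ltW a1)).
set x := g / _ => h.
have gx : g = (1+a)*x by rewrite /x mulrC divfK // gt_eqF.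
have x0 : 0 < x by rewrite /x divr_gt0.
rewrite gx in h. exfalso. nra.
Qed.

Lemma best_resp2 (a g sg Y q : R) : 0 < a -> 0 < g -> 0 <= q ->
  (forall x, 0 <= x -> a*x*(sg*Y) - (1+a)*x^+2 + g*x <= a*q*(sg*Y) - (1+a)*q^+2 + g*q) ->
  (forall x, 0 <= x -> a*x*((-sg)*Y) - (1+a)*x^+2 + g*x <= a*q*(sg*Y) - (1+a)*q^+2 + g*q) ->
  2*(1+a)*q = a*sg*Y + g.
Proof.
move=> a0 g0 q0 H1 H2.
apply: (@best_resp a g _ q a0 g0 q0) => x x0.
  have e : forall y, (a*sg*Y + g)*y - (1+a)*y^+2 = a*y*(sg*Y) - (1+a)*y^+2 + g*y
    by move=> y; ring.
  rewrite !e; exact: H1.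
have e : (2*g - (a*sg*Y + g))*x - (1+a)*x^+2 = a*x*((-sg)*Y) - (1+a)*x^+2 + g*x by ring.
have e2 : (a*sg*Y + g)*q - (1+a)*q^+2 = a*q*(sg*Y) - (1+a)*q^+2 + g*q by ring.
rewrite e e2; exact: H2.
Qed.

Lemma profitE m n alpha (beta : 'cV[R]_m) (gamma : 'cV[R]_n) (As : 'M[R]_(m,n))
  (qs sigma : 'cV[R]_n) i e x :
  dotv beta beta = 1 ->
  (forall j, col j As = sigma j 0 *: beta) ->
  profit alpha beta gamma As qs i (e *: beta) x =
  alpha * x * (e * (1 - (dotv qs sigma - qs i 0 * sigma i 0)))
  - (1 + alpha) * x ^+ 2 + gamma i 0 * x.
Proof.
move=> hb hc.
rewrite /profit.
have -> : \sum_(j < n | j != i) qs j 0 *: col j As =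
          (\sum_(j < n | j != i) qs j 0 * sigma j 0) *: beta.
  rewrite scaler_suml; apply: eq_bigr => j _; by rewrite hc scalerA.
have -> : dotv qs sigma - qs i 0 * sigma i 0 = \sum_(j < n | j != i) qs j 0 * sigma j 0.
  by rewrite /dotv (bigD1 i) //= addrC addrK.
by rewrite -{2}(scale1r beta) -scalerBl dotvZl dotvZr hb mulr1.
Qed.

Lemma dotv_self_sign n (sigma : 'cV[R]_n) :
  (forall i, sigma i 0 = 1 \/ sigma i 0 = -1) -> dotv sigma sigma = n%:R.
Proof.
move=> hs; rewrite /dotv (eq_bigr (fun _ => 1)).
  by rewrite sumr_const card_ord.
by move=> i _; case: (hs i) => ->; rewrite ?mulr1 ?mulrNN ?mulr1.
Qed.
End H.
Lemma alg (R : realFieldType) (a nn g G s Od Os : R) : 0 < a -> 0 <= nn ->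
 (2+a)*s = g + a*(1-s)*nn ->
 Od = a*(1-2^-1) + (2+a)^-1*G - 2^-1*((2+a)^-1*((2+a)^-1*G)) ->
 Os = a*(s - 2^-1*s^+2) + (2+a)^-1*(G + a*(1-s)*g)
      - 2^-1*((2+a)^-1*((2+a)^-1*(G + 2*(a*(1-s))*g + (a*(1-s))^+2*nn))) ->
 ((2+a < g \/ g < nn*a*(2+a)/(2*(1+a)*(2+(nn+1)*a) + nn*a)) -> Os < Od)
 /\ (2+a <= g -> Os <= Od).
Proof.
move=> a0 n0 hs hOd hOs.
set c := 2 + a.
have c0 : 0 < c by rewrite /c; lra.
set N := c + a * nn.
have N0 : 0 < N by rewrite /N; nra.
set t := 1 - s.
have tN : t * N = c - g.
  rewrite /t /N in hs *; apply/eqP; rewrite -subr_eq0.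
  have -> : (1 - s) * (c + a * nn) - (c - g) = -(c*s - (g + a*(1-s)*nn)) by rewrite /c; ring.
  by rewrite hs subrr oppr0.
pose D := Od - Os.
have key : D * (2 * c^+2 * N^+2) =
   a*(c-g)*((c-g)*(c^+2+a*nn) - 2*g*(1+a)*N).
  rewrite -tN /D hOd hOs /t /N /c; field.
  by rewrite /c; lra.
have Q0 : 0 < 2 * c^+2 * N^+2 by rewrite !mulr_gt0 // exprn_gt0.
rewrite -[Os < Od]subr_gt0 -[Os <= Od]subr_ge0 -/D.
have pos : 0 < D <-> 0 < D * (2 * c^+2 * N^+2) by rewrite pmulr_lgt0.
have nng : 0 <= D <-> 0 <= D * (2 * c^+2 * N^+2) by rewrite pmulr_lge0.
rewrite pos nng key; split.
  case=> hg.
    have h1 : c - g < 0 by lra.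
    have h2 : (c-g)*(c^+2+a*nn) - 2*g*(1+a)*N < 0.
      have : (c-g)*(c^+2+a*nn) <= 0 by rewrite nmulr_rle0 //; nra.
      have : 0 < 2*g*(1+a)*N by rewrite !mulr_gt0 //; lra.
      lra.
    rewrite -mulrA mulr_gt0 //. by rewrite nmulr_rgt0.
  have Dp : 0 < 2*(1+a)*(2+(nn+1)*a) + nn*a by nra.
  move: hg; rewrite ltr_pdivlMr // => hg.
  have eN : 2+(nn+1)*a = N by rewrite /N /c; ring.
  rewrite eN in hg Dp.
  have gc : g < c.
    case: (ltrP g c) => // cg; exfalso.
    have : c * (2*(1+a)*N + nn*a) <= g * (2*(1+a)*N + nn*a) by rewrite ler_pM2r.
    have : nn * a * c < c * (2*(1+a)*N + nn*a).
      rewrite mulrC ltr_pM2l //. have : 0 < 2*(1+a)*N by rewrite !mulr_gt0 //; lra.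
      lra.
    lra.
  have h1 : 0 < c - g by lra.
  rewrite -mulrA mulr_gt0 // mulr_gt0 //.
  have : 0 < c^+2 * (c - g) by rewrite mulr_gt0 // exprn_gt0.
  have e : (c-g)*(c^+2+a*nn) - 2*g*(1+a)*N = c^+2*(c-g) + (nn*a*c - g*(2*(1+a)*N + nn*a)) by ring.
  rewrite e. lra.
move=> hg.
have h1 : c - g <= 0 by move: hg; rewrite /c; lra.
have h2 : (c-g)*(c^+2+a*nn) - 2*g*(1+a)*N <= 0.
  have : (c-g)*(c^+2+a*nn) <= 0 by rewrite mulr_le0_ge0 //; nra.
  have : 0 <= 2*g*(1+a)*N by rewrite !mulr_ge0 //; lra.
  lra.
rewrite -mulrA mulr_ge0 //; first lra. by rewrite mulr_le0.
Qed.

Theorem theorem4 (R : realFieldType) (m n : nat) (alpha : R)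
  (beta : 'cV[R]_m) (gamma : 'cV[R]_n)
  (Ad : 'M[R]_(m, n)) (qd : 'cV[R]_n)
  (sigma : 'cV[R]_n) (As : 'M[R]_(m, n)) (qs : 'cV[R]_n) :
  (2 <= n)%N -> (2 <= m)%N -> 0 < alpha ->
  dotv beta beta = 1 ->
  (forall i, 0 < gamma i 0) ->
  rsmall gamma <= 2 + alpha -> 2 + alpha <= Rnorm1 gamma ->
  equilibrium alpha beta gamma Ad qd ->
  Ad *m qd = beta ->
  qd = (2 + alpha)^-1 *: gamma ->
  (forall i, sigma i 0 = 1 \/ sigma i 0 = -1) ->
  equilibrium alpha beta gamma As qs ->
  (forall i, col i As = sigma i 0 *: beta) ->
  [/\ (dotv sigma gamma > 2 + alpha \/
       dotv sigma gamma < n%:R * alpha * (2 + alpha) /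
         (2 * (1 + alpha) * (2 + n.+1%:R * alpha) + n%:R * alpha)) ->
        Omega alpha beta gamma Ad qd > Omega alpha beta gamma As qs,
      (forall i, sigma i 0 = 1) ->
        Omega alpha beta gamma Ad qd >= Omega alpha beta gamma As qs /\
        (Rnorm1 gamma <> 2 + alpha ->
           Omega alpha beta gamma Ad qd > Omega alpha beta gamma As qs)
    & dotv sigma gamma <= 0 ->
        Omega alpha beta gamma Ad qd > Omega alpha beta gamma As qs].
Proof.
move=> n2 m2 a0 hb hg hr hR _ hAd hqd hsig eqs hcol.
set c := 2 + alpha.
have c0 : 0 < c by rewrite /c; lra.
set s := dotv qs sigma.
set g := dotv sigma gamma.
set G := dotv gamma gamma.
have hsq : forall i, sigma i 0 * sigma i 0 = 1.
  by move=> i; case: (hsig i) => ->; rewrite ?mulr1 ?mulrNN ?mulr1.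
have foc : forall i, qs i 0 = c^-1 * (gamma i 0 + alpha * (1 - s) * sigma i 0).
  move=> i; have [U [q0 H]] := eqs i.
  have h := @best_resp2 R alpha (gamma i 0) (sigma i 0)
     (1 - (s - qs i 0 * sigma i 0)) (qs i 0) a0 (hg i) q0.
  have PE := fun e x => profitE alpha gamma qs i e x hb hcol.
  have Ub : forall e, e * e = 1 -> unit_vec (e *: beta).
    by move=> e he; rewrite /unit_vec dotvZl dotvZr hb mulr1.
  have k : 2 * (1 + alpha) * qs i 0 =
           alpha * sigma i 0 * (1 - (s - qs i 0 * sigma i 0)) + gamma i 0.
    apply: h => x x0.
      have := H (sigma i 0 *: beta) x (Ub _ (hsq i)) x0.
      by rewrite hcol !PE.
    have := H ((- sigma i 0) *: beta) x (Ub _ _) x0.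
    rewrite hcol !PE; apply; by rewrite mulrNN hsq.
  apply: (mulIf (lt0r_neq0 c0)); rewrite mulrAC mulVf ?gt_eqF // mul1r.
  have e : forall x, x * c = 2*(1+alpha)*x - alpha * x by move=> x; rewrite /c; ring.
  rewrite e k.
  have -> : alpha * sigma i 0 * (1 - (s - qs i 0 * sigma i 0)) =
     alpha * sigma i 0 * (1 - s) + alpha * qs i 0 * (sigma i 0 * sigma i 0) by ring.
  rewrite hsq; ring.
have hqs : qs = c^-1 *: (gamma + (alpha * (1 - s)) *: sigma).
  apply/matrixP => i j; rewrite ord1 !mxE foc; congr (_ * (_ + _)); by rewrite mxE.
have hnn := dotv_self_sign hsig.
have hs : c * s = g + alpha * (1 - s) * n%:R.
  rewrite {1}/s {1}hqs dotvZl dotvDl dotvZl hnn (dotvC gamma) -/g.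
  by rewrite mulrA mulfV ?gt_eqF // mul1r.
have hx : As *m qs = s *: beta.
  apply/matrixP => k j; rewrite ord1 !mxE /s /dotv mulr_suml; apply: eq_bigr => i _.
  have -> : As k i = col i As k 0 by rewrite mxE.
  by rewrite hcol mxE; ring.
have hOs : Omega alpha beta gamma As qs =
   alpha*(s - 2^-1*s^+2) + c^-1*(G + alpha*(1-s)*g)
      - 2^-1*(c^-1*(c^-1*(G + 2*(alpha*(1-s))*g + (alpha*(1-s))^+2*n%:R))).
  rewrite /Omega hx dotvZl dotvZr dotvZl hb.
  rewrite hqs !dotvZl ?dotvZr !dotvDl ?dotvDr ?dotvZl ?dotvZr hnn (dotvC gamma sigma) -/g -/G.
  ring.
have hOd : Omega alpha beta gamma Ad qd =
   alpha*(1-2^-1) + c^-1*G - 2^-1*(c^-1*(c^-1*G)).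
  rewrite /Omega /= hAd hb hqd !dotvZl !dotvZr -/G; ring.
have n0 : 0 <= n%:R :> R by [].
have [A1 A2] := alg a0 n0 hs hOd hOs.
rewrite -[n.+1%:R]natr1.
have Tpos : 0 < n%:R * alpha * c / (2 * (1 + alpha) * (2 + (n%:R + 1) * alpha) + n%:R * alpha).
  apply: divr_gt0.
    rewrite !mulr_gt0 // ltr0n; exact: (ltn_trans (isT : (0 < 1)%N) n2).
  have : 0 < 2 * (1 + alpha) * (2 + (n%:R + 1) * alpha) by rewrite !mulr_gt0 //; nra.
  have : 0 <= n%:R * alpha by rewrite mulr_ge0 // ltW.
  lra.
split.
- exact: A1.
- move=> h1.
  have eg : g = Rnorm1 gamma.
    rewrite /g /Rnorm1 /dotv; apply: eq_bigr => i _.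
    by rewrite h1 mul1r ger0_norm // ltW.
  split; first by apply: A2; rewrite eg.
  move=> hne; apply: A1; left; rewrite eg lt_neqAle hR andbT.
  by apply/eqP => e; apply: hne; rewrite -e.
- move=> h; apply: A1; right; exact: le_lt_trans h Tpos.
Qed.
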